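(* Let $\nu\in\mathbb{N}$, let $(X,d)$ be a complete $\nu$-generalized metric space, and let $T:X\to X$ be sequentially continuous and asymptotically regular. For $\gamma>0$ define $m:X\times X\to[0,\infty)$ by $m(x,y)=d(x,y)+\gamma\bigl(d(x,Tx)+d(y,Ty)\bigr)$. Suppose $d(Tx,Ty)<m(x,y)$ for all $x,y\in X$ with $x\ne y$, and that for every $\epsilon>0$ there exist $\delta>0$ and $N\in\mathbb{Z}^+$ such that for all $x,y\in X$, $m(T^Nx,T^Ny)<\delta+\epsilon$ implies $d(T^{N+1}x,T^{N+1}y)\le\epsilon$. Then $T$ has a unique fixed point $z$, and for every $x\in X$ the Picard iterates $T^nx$ $(n\in\mathbb{N})$ converge to $z$ in the strong sense.
   Context: Let $X$ be a nonempty set, $d:X\times X\to[0,\infty)$, and $\nu\in\mathbb{N}$. $(X,d)$ is a $\nu$-generalized metric space if: (1) $d(x,y)=0$ iff $x=y$; (2) $d(x,y)=d(y,x)$ for all $x,y$; (3) $d(x,y)\le d(x,u_1)+d(u_1,u_2)+\dots+d(u_\nu,y)$ for every set $\{x,u_1,\dots,u_\nu,y\}$ of $\nu+2$ pairwise distinct elements of $X$. A sequence $\{x_n\}$ in $X$ is Cauchy if $\lim_{n\to\infty}\sup\{d(x_n,x_{n+1+m}): m\in\mathbb{Z}^+\}=0$ ($\mathbb{Z}^+$ the nonnegative integers). $\{x_n\}$ converges to $x$ if $d(x,x_n)\to0$; it converges to $x$ in the strong sense if it is Cauchy and converges to $x$. $X$ is complete if every Cauchy sequence in $X$ converges. $T$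 is sequentially continuous if $\{Tx_n\}$ converges to $Tx$ whenever $\{x_n\}$ converges to $x$. $T$ is asymptotically regular if $d(T^nx,T^{n+1}x)+d(T^nx,T^{n+2}x)\to0$ for every $x\in X$. $T^0$ is the identity and $T^n$ the $n$-th iterate. *)

(* Defs.v *)
From Stdlib Require Import Reals Lra Lia List.
Open Scope R_scope.

Fixpoint path_len {X : Type} (d : X -> X -> R) (x : X) (l : list X) : R :=
  match l with
  | nil => 0
  | y :: l' => d x y + path_len d y l'
  end.

(* (X,d) is a nu-generalized metric space. The nu intermediate points
   u_1..u_nu are given as u 0, ..., u (nu-1). *)
Definition gen_metric {X : Type} (nu : nat) (d : X -> X -> R) : Prop :=
  (forall x y, 0 <= d x y) /\
  (forall x y, d x y = 0 <-> x = y) /\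
  (forall x y, d x y = d y x) /\
  (forall (x y : X) (u : nat -> X),
     NoDup (x :: map u (seq 0 nu) ++ y :: nil) ->
     d x y <= path_len d x (map u (seq 0 nu) ++ y :: nil)).

Definition is_Cauchy {X : Type} (d : X -> X -> R) (s : nat -> X) : Prop :=
  forall eps, eps > 0 -> exists N, forall n m, (n >= N)%nat ->
    d (s n) (s (n + 1 + m)%nat) <= eps.

Definition converges_to {X : Type} (d : X -> X -> R) (s : nat -> X) (x : X) : Prop :=
  Un_cv (fun n => d x (s n)) 0.

Definition converges_strong {X : Type} (d : X -> X -> R) (s : nat -> X) (x : X) : Prop :=
  is_Cauchy d s /\ converges_to d s x.

Definition complete {X : Type} (d : X -> X -> R) : Prop :=
  forall s : nat -> X, is_Cauchy d s -> exists x, converges_to d s x.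

Definition seq_continuous {X : Type} (d : X -> X -> R) (T : X -> X) : Prop :=
  forall (s : nat -> X) (x : X), converges_to d s x ->
    converges_to d (fun n => T (s n)) (T x).

Definition iterT {X : Type} (T : X -> X) (n : nat) (x : X) : X := Nat.iter n T x.

Definition asympt_regular {X : Type} (d : X -> X -> R) (T : X -> X) : Prop :=
  forall x, Un_cv (fun n => d (iterT T n x) (iterT T (S n) x)
                            + d (iterT T n x) (iterT T (S (S n)) x)) 0.

(* Main.v *)
Require Import Defs.
From Stdlib Require Import Reals Lra Lia List Classical Arith.
Open Scope R_scope.

Lemma iter_add {X} (T:X->X) a b x : iterT T (a+b) x = iterT T a (iterT T b x).
Proof. unfold iterT. induction a; simpl; congruence. Qed.

Lemma iterS {X} (T:X->X) k x : iterT T (S k) x = T (iterT T k x).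
Proof. reflexivity. Qed.

Lemma pl_last {X} d (w:nat->X) n k : path_len d (w k) (map w (seq (S k) (S n))) =
  path_len d (w k) (map w (seq (S k) n)) + d (w (k+n)%nat) (w (S (k+n))).
Proof.
  revert k; induction n; intro k.
  - simpl. rewrite Nat.add_0_r. lra.
  - change (seq (S k) (S (S n))) with (S k :: seq (S (S k)) (S n)).
    change (seq (S k) (S n)) with (S k :: seq (S (S k)) n).
    cbn [map path_len]. rewrite IHn.
    replace (S k + n)%nat with (k + S n)%nat by lia. lra.
Qed.

Lemma pl_bound {X} d (w:nat->X) c n k :
  (forall i, (i < n)%nat -> d (w (k+i)%nat) (w (S (k+i))) <= c) ->
  path_len d (w k) (map w (seq (S k) n)) <= INR n * c.
Proof.
  revert k; induction n; intros k H.
  - simpl. lra.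
  - change (seq (S k) (S n)) with (S k :: seq (S (S k)) n).
    cbn [map path_len]. rewrite S_INR.
    assert (H0 := H 0%nat ltac:(lia)). rewrite Nat.add_0_r in H0.
    assert (IH := IHn (S k) ltac:(intros i Hi; replace (S k + i)%nat with (k + S i)%nat by lia; apply H; lia)).
    lra.
Qed.

Lemma gm_tri {X} nu d (w : nat -> X): gen_metric nu d ->
  NoDup (map w (seq 0 (S (S nu)))) ->
  d (w 0%nat) (w (S nu)) <= path_len d (w 0%nat) (map w (seq 1 (S nu))).
Proof.
  intros [_ [_ [_ H]]] ND. specialize (H (w 0%nat) (w (S nu)) (fun i => w (S i))).
  assert (E: map (fun i => w (S i)) (seq 0 nu) = map w (seq 1 nu)).
  { rewrite <- seq_shift, map_map. reflexivity. }
  rewrite E in H.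
  assert (E2: map w (seq 1 (S nu)) = map w (seq 1 nu) ++ w (S nu) :: nil).
  { rewrite seq_S, map_app. reflexivity. }
  rewrite E2. apply H. rewrite <- E2. exact ND.
Qed.

Lemma nodup_inj {X} (w:nat->X) n :
  (forall i j, (i<n)%nat -> (j<n)%nat -> w i = w j -> i = j) -> NoDup (map w (seq 0 n)).
Proof.
  intros H. apply NoDup_map_NoDup_ForallPairs; [|apply seq_NoDup].
  intros a b Ha Hb. apply in_seq in Ha, Hb. apply H; lia.
Qed.

Lemma un_small (u: nat->R): (forall n, 0 <= u n) -> Un_cv u 0 ->
  forall e, e > 0 -> exists N, forall n, (n>=N)%nat -> u n < e.
Proof.
  intros H0 H e He; destruct (H e He) as [N HN]; exists N; intros n Hn.
  specialize (HN n Hn); unfold R_dist in HN; rewrite Rminus_0_r, Rabs_right in HN; [lra| apply Rle_ge, H0].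
Qed.

Lemma a_small {X} (d : X -> X -> R) T : asympt_regular d T -> (forall x y, 0 <= d x y) ->
  forall x c, c > 0 -> exists K, forall k, (k >= K)%nat ->
   d (iterT T k x) (iterT T (S k) x) < c /\ d (iterT T k x) (iterT T (S (S k)) x) < c.
Proof.
  intros HA Hd x c Hc.
  assert (P: forall n, 0 <= d (iterT T n x) (iterT T (S n) x) + d (iterT T n x) (iterT T (S (S n)) x)).
  { intro n; pose proof (Hd (iterT T n x) (iterT T (S n) x));
     pose proof (Hd (iterT T n x) (iterT T (S (S n)) x)); lra. }
  destruct (un_small _ P (HA x) c Hc) as [K HK].
  exists K. intros k Hk. specialize (HK k Hk).
  pose proof (Hd (iterT T k x) (iterT T (S k) x));
     pose proof (Hd (iterT T k x) (iterT T (S (S k)) x)); lra.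
Qed.

Lemma fix_or_inj {X} nu (d : X -> X -> R) T : gen_metric nu d -> asympt_regular d T ->
  forall x, (exists n, T (iterT T n x) = iterT T n x) \/
    (forall n m, n <> m -> iterT T n x <> iterT T m x).
Proof.
  intros HG HA x.
  destruct HG as [Hd [Hd0 [Hsym _]]].
  assert (K: forall n m, (n < m)%nat -> iterT T n x = iterT T m x ->
             exists k, T (iterT T k x) = iterT T k x).
  { intros n m Hnm E. set (p := (m - n)%nat).
    assert (Per: forall t, iterT T (n + t*p) x = iterT T n x).
    { induction t.
      - replace (n + 0*p)%nat with n by lia. reflexivity.
      - replace (n + S t * p)%nat with (t*p + m)%nat by (unfold p; lia).
        rewrite iter_add, <- E, <- iter_add.
        replace (t*p+n)%nat with (n+t*p)%nat by lia. exact IHt. }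
    exists n. destruct (classic (T (iterT T n x) = iterT T n x)) as [F|F]; auto.
    exfalso.
    assert (Pos: d (iterT T n x) (T (iterT T n x)) > 0).
    { destruct (Hd (iterT T n x) (T (iterT T n x))) as [P|P]; auto.
      symmetry in P; apply Hd0 in P. congruence. }
    destruct (a_small d T HA Hd x _ Pos) as [K HK].
    destruct (HK (n + K * p)%nat ltac:(unfold p; nia)) as [H1 _].
    rewrite iterS, Per in H1. lra. }
  destruct (classic (exists n m, n<>m /\ iterT T n x = iterT T m x)) as [[n [m [Hnm E]]]|Hn].
  - left. destruct (Nat.lt_gt_cases n m) as [[L|L] _]; auto.
    + apply (K n m); auto.
    + apply (K m n); auto.
  - right. intros n m Hnm E. apply Hn. eauto.
Qed.

Lemma le_all_small (D A : R) : A > 0 -> (forall e, e > 0 -> D <= A * e) -> D <= 0.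
Proof.
  intros HA H. destruct (Rle_dec D 0) as [|n]; auto. exfalso.
  assert (Hp : D / (2*A) > 0). { apply Rdiv_lt_0_compat; lra. }
  specialize (H _ Hp). replace (A * (D/(2*A))) with (D/2) in H by (field; lra). lra.
Qed.

Lemma lim_uniq {X} nu (d : X -> X -> R) (s : nat -> X) z y :
  gen_metric nu d -> (1 <= nu)%nat ->
  (forall n m, n <> m -> s n <> s m) ->
  (forall c, c > 0 -> exists K, forall k, (k >= K)%nat -> d (s k) (s (S k)) < c) ->
  converges_to d s z -> converges_to d s y -> z = y.
Proof.
  intros HG Hnu Inj Ha Cz Cy.
  destruct (classic (z = y)) as [|Hzy]; auto. exfalso.
  pose proof HG as [Hd [Hd0 [Hsym _]]].
  assert (Av: forall v, exists n0, forall n, (n >= n0)%nat -> s n <> v).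
  { intro v. destruct (classic (exists n, s n = v)) as [[n1 E]|NE].
    - exists (S n1). intros n Hn E'. apply (Inj n n1); [lia| congruence].
    - exists 0%nat. intros n _ E'. apply NE; eauto. }
  destruct (Av z) as [n1 H1]. destruct (Av y) as [n2 H2].
  assert (D0: d z y <= 0).
  { apply (le_all_small _ (INR (S nu))). { apply lt_0_INR; lia. }
    intros e He.
    destruct (un_small _ (fun n => Hd z (s n)) Cz e He) as [Nz HNz].
    destruct (un_small _ (fun n => Hd y (s n)) Cy e He) as [Ny HNy].
    destruct (Ha e He) as [Ka HKa].
    set (n := (n1 + n2 + Nz + Ny + Ka)%nat).
    set (w := fun i => match i with 0%nat => z | S i' => if (i' <? nu)%nat then s (n+i')%nat else y end).
    assert (HwN: w (S nu) = y). { unfold w. rewrite Nat.ltb_irrefl. reflexivity. }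
    assert (ND: NoDup (map w (seq 0 (S (S nu))))).
    { apply nodup_inj. intros i j Hi Hj E. unfold w in E.
      destruct i as [|i]; destruct j as [|j]; auto.
      - destruct (Nat.ltb_spec j nu).
        + exfalso; apply (H1 (n+j)%nat); [unfold n; lia| auto].
        + congruence.
      - destruct (Nat.ltb_spec i nu).
        + exfalso; apply (H1 (n+i)%nat); [unfold n; lia| auto].
        + congruence.
      - destruct (Nat.ltb_spec i nu); destruct (Nat.ltb_spec j nu).
        + destruct (Nat.eq_dec i j); [congruence|].
          exfalso; apply (Inj (n+i)%nat (n+j)%nat); [lia|auto].
        + exfalso; apply (H2 (n+i)%nat); [unfold n; lia| auto].
        + exfalso; apply (H2 (n+j)%nat); [unfold n; lia| auto].
        + f_equal; lia. }
    pose proof (gm_tri nu d w HG ND) as Tri.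
    rewrite (pl_last d w nu 0) in Tri.
    change (w 0%nat) with z in Tri at 1. rewrite HwN in Tri at 1.
    assert (B1: path_len d (w 0%nat) (map w (seq 1 nu)) <= INR nu * e).
    { apply (pl_bound d w e nu 0). intros i Hi. rewrite Nat.add_0_l. unfold w.
      destruct i as [|i].
      - destruct (Nat.ltb_spec 0 nu); [|lia]. rewrite Nat.add_0_r.
        left; apply HNz; unfold n; lia.
      - destruct (Nat.ltb_spec i nu); [|lia]. destruct (Nat.ltb_spec (S i) nu); [|lia].
        replace (n + S i)%nat with (S (n+i)) by lia. left; apply HKa; unfold n; lia. }
    assert (B2: d (w (0+nu)%nat) (w (S (0 + nu))) <= e).
    { rewrite Nat.add_0_l, HwN. destruct nu as [|k]; [lia|]. unfold w.
      destruct (Nat.ltb_spec k (S k)); [|lia]. rewrite Hsym. left; apply HNy; unfold n; lia. }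
    rewrite S_INR. lra. }
  apply Hzy. apply Hd0. pose proof (Hd z y). lra.
Qed.

Lemma exists_c (A B del : R) : A > 0 -> B > 0 -> del > 0 ->
  exists c, c > 0 /\ A * c <= del/2 /\ B * c < del/2.
Proof.
  intros HA HB Hd. exists (del / (4*(A+B))).
  assert (Hc: del / (4*(A+B)) > 0) by (apply Rdiv_lt_0_compat; lra).
  assert (E: A * (del/(4*(A+B))) + B * (del/(4*(A+B))) = del/4) by (field; lra).
  assert (P1: A * (del/(4*(A+B))) > 0) by (apply Rmult_lt_0_compat; lra).
  assert (P2: B * (del/(4*(A+B))) > 0) by (apply Rmult_lt_0_compat; lra).
  split; [lra| split; lra].
Qed.

Definition zg (nu j i : nat) : nat :=
  if (i <? j)%nat then i else
    (j + (if (2*(i-j)+1 <=? S nu - j)%nat then 2*(i-j)+1 else 2*((S nu - j) - (i-j))))%nat.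

Ltac zgd := unfold zg; repeat match goal with
  | |- context [ (?a <? ?b)%nat ] => destruct (Nat.ltb_spec a b)
  | |- context [ (?a <=? ?b)%nat ] => destruct (Nat.leb_spec a b)
  end; lia.

Lemma zg0 nu j : (1 <= j)%nat -> zg nu j 0 = 0%nat.
Proof. intros; zgd. Qed.
Lemma zgN nu j : (1 <= j <= S nu)%nat -> zg nu j (S nu) = j.
Proof. intros; zgd. Qed.
Lemma zg_inj nu j i i' : (1 <= j <= S nu)%nat -> (i < S (S nu))%nat -> (i' < S (S nu))%nat ->
  zg nu j i = zg nu j i' -> i = i'.
Proof. intros; revert H2; zgd. Qed.
Lemma zg_step nu j i : (1 <= j <= S nu)%nat -> (i <= nu)%nat ->
  zg nu j (S i) = (zg nu j i + 1)%nat \/ zg nu j (S i) = (zg nu j i + 2)%nat \/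
  zg nu j i = (zg nu j (S i) + 1)%nat \/ zg nu j i = (zg nu j (S i) + 2)%nat.
Proof. intros; zgd. Qed.

Lemma cauchy_inj {X} nu (d : X -> X -> R) T gamma x :
  gen_metric nu d -> (1 <= nu)%nat -> asympt_regular d T -> gamma > 0 ->
  (forall eps, eps > 0 -> exists delta, delta > 0 /\ exists N : nat,
     forall x y, d (iterT T N x) (iterT T N y) + gamma * (d (iterT T N x) (T (iterT T N x)) + d (iterT T N y) (T (iterT T N y))) < delta + eps ->
       d (iterT T (S N) x) (iterT T (S N) y) <= eps) ->
  (forall n m, n <> m -> iterT T n x <> iterT T m x) ->
  is_Cauchy d (fun n => iterT T n x).
Proof.
  intros HG Hnu HA Hg Hm Inj.
  pose proof HG as [Hd [Hd0 [Hsym _]]].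
  set (s := fun n => iterT T n x).
  assert (sS: forall k, s (S k) = T (s k)) by reflexivity.
  intros e He. set (eps := e/2).
  destruct (Hm eps ltac:(unfold eps; lra)) as [d0 [Hd0p [N HN]]].
  set (del := Rmin d0 e).
  assert (Hdel: del > 0) by (unfold del; apply Rmin_pos; lra).
  assert (Hdel1: del <= d0) by apply Rmin_l.
  assert (Hdel2: del <= e) by apply Rmin_r.
  assert (HN': forall q r, (q >= N)%nat -> (r >= N)%nat ->
     d (s q) (s r) + gamma * (d (s q) (s (S q)) + d (s r) (s (S r))) < del + eps ->
     d (s (S q)) (s (S r)) <= eps).
  { intros q r Hq Hr H.
    assert (Eq: forall k, (k >= N)%nat -> iterT T N (s (k - N)%nat) = s k).
    { intros k Hk. unfold s. rewrite <- iter_add. f_equal. lia. }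
    specialize (HN (s (q-N)%nat) (s (r-N)%nat)).
    rewrite !iterS, !Eq in HN by auto. rewrite !sS. apply HN.
    rewrite <- !sS. lra. }
  destruct (exists_c (INR (S nu)) (2*gamma) del ltac:(apply lt_0_INR; lia) ltac:(lra) Hdel)
    as [c [Hc [Hc1 Hc2]]].
  destruct (a_small d T HA Hd x c Hc) as [K0 HK0].
  set (K := (K0 + N)%nat).
  assert (Ha: forall k, (k >= K)%nat -> d (s k) (s (S k)) < c).
  { intros k Hk. apply (HK0 k). unfold K in Hk; lia. }
  assert (Hb: forall k, (k >= K)%nat -> d (s k) (s (S (S k))) < c).
  { intros k Hk. apply (HK0 k). unfold K in Hk; lia. }
  assert (Zig: forall j p, (1 <= j <= S nu)%nat -> (p >= K)%nat ->
            d (s p) (s (p + j)%nat) <= INR (S nu) * c).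
  { intros j p Hj Hp.
    set (w := fun i => s (p + zg nu j i)%nat).
    assert (Hw0: w 0%nat = s p). { unfold w. rewrite zg0 by lia. f_equal; lia. }
    assert (HwN: w (S nu) = s (p+j)%nat). { unfold w. rewrite zgN by lia. reflexivity. }
    rewrite <- Hw0, <- HwN.
    eapply Rle_trans. apply (gm_tri nu d w HG).
    { apply nodup_inj. intros i i' Hi Hi' E. unfold w in E.
      apply (zg_inj nu j); auto.
      destruct (Nat.eq_dec (p + zg nu j i) (p + zg nu j i')) as [E'|E'];
        [lia| exfalso; apply (Inj _ _ E' E)]. }
    apply (pl_bound d w c (S nu) 0). intros i Hi. rewrite Nat.add_0_l. unfold w.
    destruct (zg_step nu j i ltac:(lia) ltac:(lia)) as [E|[E|[E|E]]]; rewrite E.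
    - replace (p + (zg nu j i + 1))%nat with (S (p + zg nu j i)) by lia.
      left; apply Ha; lia.
    - replace (p + (zg nu j i + 2))%nat with (S (S (p + zg nu j i))) by lia.
      left; apply Hb; lia.
    - rewrite Hsym. replace (p + (zg nu j (S i) + 1))%nat with (S (p + zg nu j (S i))) by lia.
      left; apply Ha; lia.
    - rewrite Hsym. replace (p + (zg nu j (S i) + 2))%nat with (S (S (p + zg nu j (S i)))) by lia.
      left; apply Hb; lia. }
  assert (Main: forall J j p, (j <= J)%nat -> (1 <= j)%nat -> (p >= K)%nat ->
            d (s p) (s (p + j)%nat) <= eps + del/2).
  { induction J; intros j p HjJ Hj1 Hp; [lia|].
    destruct (le_lt_dec j (S nu)) as [Hjs|Hjs].
    - pose proof (Zig j p ltac:(lia) Hp). pose proof (Hd (s p) (s (p+j)%nat)).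
      assert (eps > 0) by (unfold eps; lra). lra.
    - set (w := fun i => if (i <=? nu)%nat then s (p+i)%nat else s (p+j)%nat).
      assert (Hw0: w 0%nat = s p). { unfold w. simpl. f_equal; lia. }
      assert (HwN: w (S nu) = s (p+j)%nat).
      { unfold w. destruct (Nat.leb_spec (S nu) nu); [lia|reflexivity]. }
      rewrite <- Hw0, <- HwN.
      eapply Rle_trans. apply (gm_tri nu d w HG).
      { apply nodup_inj. intros i i' Hi Hi' E. unfold w in E.
        destruct (Nat.leb_spec i nu); destruct (Nat.leb_spec i' nu).
        - destruct (Nat.eq_dec (p + i) (p + i')) as [E'|E'];
            [lia| exfalso; apply (Inj _ _ E' E)].
        - destruct (Nat.eq_dec (p + i) (p + j)) as [E'|E'];
            [lia| exfalso; apply (Inj _ _ E' E)].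
        - destruct (Nat.eq_dec (p + j) (p + i')) as [E'|E'];
            [lia| exfalso; apply (Inj _ _ E' E)].
        - lia. }
      rewrite (pl_last d w nu 0).
      assert (B1: path_len d (w 0%nat) (map w (seq 1 nu)) <= INR nu * c).
      { apply (pl_bound d w c nu 0). intros i Hi. rewrite Nat.add_0_l. unfold w.
        destruct (Nat.leb_spec i nu); [|lia]. destruct (Nat.leb_spec (S i) nu); [|lia].
        replace (p + S i)%nat with (S (p + i)) by lia. left; apply Ha; lia. }
      assert (B2: d (w (0+nu)%nat) (w (S (0 + nu))) <= eps).
      { rewrite Nat.add_0_l, HwN. unfold w. destruct (Nat.leb_spec nu nu); [|lia].
        replace (p + nu)%nat with (S (p + nu - 1)) by lia.
        replace (p + j)%nat with (S (p + j - 1)) by lia.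
        apply HN'; [unfold K in Hp; lia| unfold K in Hp; lia|].
        pose proof (IHJ (j - nu)%nat (p + nu - 1)%nat ltac:(lia) ltac:(lia) ltac:(lia)) as IH.
        replace (p + nu - 1 + (j - nu))%nat with (p + j - 1)%nat in IH by lia.
        pose proof (Ha (p + nu - 1)%nat ltac:(lia)).
        pose proof (Ha (p + j - 1)%nat ltac:(lia)).
        assert (gamma * (d (s (p + nu - 1)%nat) (s (S (p + nu - 1))) + d (s (p + j - 1)%nat) (s (S (p + j - 1))))
                < gamma * (2 * c)).
        { apply Rmult_lt_compat_l; lra. }
        lra. }
      rewrite S_INR, Rmult_plus_distr_r, Rmult_1_l in Hc1. eapply Rle_trans; [apply Rplus_le_compat; [exact B1|exact B2]|]. assert (INR nu * c <= del / 2) by lra. lra. }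
  exists K. intros n m Hn.
  pose proof (Main (1+m)%nat (1+m)%nat n ltac:(lia) ltac:(lia) Hn) as M.
  replace (n + (1+m))%nat with (n + 1 + m)%nat in M by lia.
  unfold s in *. unfold eps in M. lra.
Qed.

Lemma per_x {X} nu (d : X -> X -> R) T gamma x :
  gen_metric nu d -> (1 <= nu)%nat -> complete d -> seq_continuous d T ->
  asympt_regular d T -> gamma > 0 ->
  (forall eps, eps > 0 -> exists delta, delta > 0 /\ exists N : nat,
     forall x y, d (iterT T N x) (iterT T N y) + gamma * (d (iterT T N x) (T (iterT T N x)) + d (iterT T N y) (T (iterT T N y))) < delta + eps ->
       d (iterT T (S N) x) (iterT T (S N) y) <= eps) ->
  exists z, T z = z /\ converges_strong d (fun n => iterT T n x) z.
Proof.
  intros HG Hnu Hcomp Hcont HA Hg Hm.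
  pose proof HG as [Hd [Hd0 [Hsym _]]].
  destruct (fix_or_inj nu d T HG HA x) as [[n Fn]|Inj].
  - exists (iterT T n x). split; auto.
    assert (C: forall k, (k >= n)%nat -> iterT T k x = iterT T n x).
    { intros k Hk. replace k with (n + (k - n))%nat by lia.
      generalize (k - n)%nat. induction n0.
      - rewrite Nat.add_0_r. reflexivity.
      - rewrite Nat.add_succ_r, iterS, IHn0. exact Fn. }
    assert (Z: d (iterT T n x) (iterT T n x) = 0) by (apply Hd0; reflexivity).
    split.
    + intros e He. exists n. intros k m Hk. cbv beta. rewrite (C k), (C (k+1+m)%nat) by lia. lra.
    + intros e He. exists n. intros k Hk. cbv beta. rewrite (C k) by lia. rewrite Z.
      unfold R_dist. rewrite Rminus_0_r, Rabs_R0. lra.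
  - pose proof (cauchy_inj nu d T gamma x HG Hnu HA Hg Hm Inj) as Cau.
    destruct (Hcomp _ Cau) as [z Cz].
    exists z. split; [|split; auto].
    assert (Ha: forall c, c > 0 -> exists K, forall k, (k >= K)%nat ->
              d (iterT T k x) (iterT T (S k) x) < c).
    { intros c Hc. destruct (a_small d T HA Hd x c Hc) as [K HK]. exists K.
      intros k Hk; apply HK; auto. }
    assert (CT: converges_to d (fun n => iterT T n x) (T z)).
    { pose proof (Hcont _ _ Cz) as C1. intros e He. destruct (C1 e He) as [N HN].
      exists (S N). intros n Hn. destruct n as [|n]; [lia|].
      apply (HN n). lia. }
    symmetry. apply (lim_uniq nu d (fun n => iterT T n x) z (T z) HG Hnu Inj Ha Cz CT).
Qed.

Theorem theorem3p7 (X : Type) (nu : nat) (d : X -> X -> R) (T : X -> X)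
  (gamma : R) :
  inhabited X ->
  (1 <= nu)%nat ->
  gen_metric nu d ->
  complete d ->
  seq_continuous d T ->
  asympt_regular d T ->
  gamma > 0 ->
  let m := fun x y => d x y + gamma * (d x (T x) + d y (T y)) in
  (forall x y, x <> y -> d (T x) (T y) < m x y) ->
  (forall eps, eps > 0 -> exists delta, delta > 0 /\ exists N : nat,
     forall x y, m (iterT T N x) (iterT T N y) < delta + eps ->
       d (iterT T (S N) x) (iterT T (S N) y) <= eps) ->
  exists z, T z = z /\ (forall w, T w = w -> w = z) /\
    (forall x, converges_strong d (fun n => iterT T n x) z).
Proof.
  intros [x0] Hnu HG Hcomp Hcont HA Hg m Hc Hm.
  pose proof HG as [Hd [Hd0 [Hsym _]]].
  assert (Uniq: forall z w, T z = z -> T w = w -> w = z).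
  { intros z w Fz Fw. destruct (classic (w = z)) as [|NE]; auto. exfalso.
    specialize (Hc w z NE). unfold m in Hc. rewrite Fz, Fw in Hc.
    assert (E1: d w w = 0) by (apply Hd0; reflexivity).
    assert (E2: d z z = 0) by (apply Hd0; reflexivity).
    rewrite E1, E2 in Hc. lra. }
  destruct (per_x nu d T gamma x0 HG Hnu Hcomp Hcont HA Hg Hm) as [z [Fz _]].
  exists z. split; [auto|split].
  - intros w Fw. apply Uniq; auto.
  - intros x. destruct (per_x nu d T gamma x HG Hnu Hcomp Hcont HA Hg Hm) as [z' [Fz' Cz']].
    rewrite <- (Uniq z z' Fz Fz'). exact Cz'.
Qed.
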